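(* Let $C:I\to\mathbb R^n$ be a smooth homotopy such that every curve $\theta\mapsto C(\theta,v)$ is immersed. Then for every $v\in[0,1]$ $$\frac{d}{dv}\sqrt{\mathrm{len}(C)(v)}\le\frac12\Big(\int_{S^1}\langle H,\partial_vC\rangle^2|\partial_\theta C|\,d\theta\Big)^{1/2},$$ and consequently for all $0\le v'<v''\le1$ $$\sqrt{\mathrm{len}(C)(v'')}-\sqrt{\mathrm{len}(C)(v')}\le\frac{\sqrt{J(C)}}{2}\sqrt{v''-v'} .$$ In particular $\sqrt{\mathrm{len}(C)}$ is Hölder continuous of exponent $1/2$ when $J(C)<\infty$.
   Context: $S^1=\mathbb R/2\pi\mathbb Z$, $I=S^1\times[0,1]$. $\mathrm{len}(C)(v)=\int_{S^1}|\partial_\theta C(\theta,v)|\,d\theta$. $T=\partial_\theta C/|\partial_\theta C|$, $H=\frac1{|\partial_\theta C|}\partial_\theta T$ (curvature vector), $\pi_Nw=w-\langle w,T\rangle T$, and $J(C)=\int_I|H|^2|\pi_N\partial_vC|^2|\partial_\theta C|\,d\theta\,dv$. *)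

(* Defs.v *)
From Stdlib Require Import Reals.
From Coquelicot Require Import Coquelicot.
Open Scope R_scope.

(* A curve/homotopy in R^n is given componentwise: C i th v, for i < n. *)
Definition homotopy := nat -> R -> R -> R.

Fixpoint sumR (n : nat) (f : nat -> R) : R :=
  match n with O => 0 | S m => sumR m f + f m end.

Definition inner (n : nat) (a b : nat -> R) : R := sumR n (fun i => a i * b i).
Definition vnorm (n : nat) (a : nat -> R) : R := sqrt (inner n a a).

Definition continuous2 (f : R -> R -> R) : Prop :=
  forall x y, continuous (fun p : R * R => f (fst p) (snd p)) (x, y).

Fixpoint Ck (k : nat) (f : R -> R -> R) : Prop :=
  continuous2 f /\
  match k with
  | O => True
  | S k' =>
      (forall x y, ex_derive (fun t => f t y) x /\ ex_derive (fun t => f x t) y) /\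
      Ck k' (fun x y => Derive (fun t => f t y) x) /\
      Ck k' (fun x y => Derive (fun t => f x t) y)
  end.

Definition smooth2 (f : R -> R -> R) : Prop := forall k, Ck k f.

Definition dth (C : homotopy) (th v : R) : nat -> R :=
  fun i => Derive (fun t => C i t v) th.
Definition dv (C : homotopy) (th v : R) : nat -> R :=
  fun i => Derive (fun s => C i th s) v.

Definition speed (n : nat) (C : homotopy) (th v : R) : R := vnorm n (dth C th v).

Definition tangent (n : nat) (C : homotopy) (th v : R) : nat -> R :=
  fun i => dth C th v i / speed n C th v.

Definition curv (n : nat) (C : homotopy) (th v : R) : nat -> R :=
  fun i => / speed n C th v * Derive (fun t => tangent n C t v i) th.

Definition projN (n : nat) (C : homotopy) (th v : R) (w : nat -> R) : nat -> R :=
  fun i => w i - inner n w (tangent n C th v) * tangent n C th v i.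

Definition len (n : nat) (C : homotopy) (v : R) : R :=
  RInt (fun th => speed n C th v) 0 (2 * PI).

Definition Jfun (n : nat) (C : homotopy) : R :=
  RInt (fun v => RInt (fun th =>
      (vnorm n (curv n C th v)) ^ 2 *
      (vnorm n (projN n C th v (dv C th v))) ^ 2 *
      speed n C th v) 0 (2 * PI)) 0 1.

(* Main.v *)
Require Import Defs.
From Stdlib Require Import Reals.
From Coquelicot Require Import Coquelicot.
From Stdlib Require Import Lra Lia Psatz.
Open Scope R_scope.


Lemma sumR_ext n f g : (forall i, (i < n)%nat -> f i = g i) -> sumR n f = sumR n g.
Proof. induction n; simpl; intros H; auto. rewrite IHn; [rewrite H|]; auto; intros; apply H; lia. Qed.

Lemma sumR_plus n f g : sumR n (fun i => f i + g i) = sumR n f + sumR n g.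
Proof. induction n; simpl; [lra|]. rewrite IHn; lra. Qed.

Lemma sumR_scal n c f : sumR n (fun i => c * f i) = c * sumR n f.
Proof. induction n; simpl; [lra|]. rewrite IHn; lra. Qed.

Lemma sumR_minus n f g : sumR n (fun i => f i - g i) = sumR n f - sumR n g.
Proof. induction n; simpl; [lra|]. rewrite IHn; lra. Qed.

Lemma sumR_nonneg n f : (forall i, (i < n)%nat -> 0 <= f i) -> 0 <= sumR n f.
Proof. induction n; simpl; intros H; [lra|]. assert (0 <= f n) by (apply H; lia).
 assert (0 <= sumR n f) by (apply IHn; intros; apply H; lia). lra. Qed.

Lemma inner_nonneg n x : 0 <= inner n x x.
Proof. apply sumR_nonneg; intros i _; apply Rle_0_sqr. Qed.

Lemma vnorm_sq n x : vnorm n x ^ 2 = inner n x x.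
Proof. unfold vnorm. simpl. rewrite Rmult_1_r. apply sqrt_sqrt, inner_nonneg. Qed.

Lemma inner_sym n x y : inner n x y = inner n y x.
Proof. apply sumR_ext; intros; ring. Qed.

Lemma CS_fin n x y : (inner n x y)^2 <= inner n x x * inner n y y.
Proof.
  set (X := inner n x x); set (Y := inner n y y); set (P := inner n x y).
  assert (Hq : forall l, 0 <= X - 2*l*P + l*l*Y).
  { intro l. assert (E : X - 2*l*P + l*l*Y = sumR n (fun i => (x i - l * y i) * (x i - l * y i))).
    { unfold X, Y, P, inner. rewrite <- sumR_scal, <- sumR_scal, <- sumR_minus, <- sumR_plus.
      apply sumR_ext; intros; ring. }
    rewrite E. apply sumR_nonneg; intros i _; apply Rle_0_sqr. }
  assert (HY : 0 <= Y) by apply inner_nonneg.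
  assert (HX : 0 <= X) by apply inner_nonneg.
  destruct (Req_dec Y 0) as [Y0|Y0].
  - destruct (Req_dec P 0) as [P0|P0]. rewrite P0; nra.
    specialize (Hq ((X+1)/(2*P))). rewrite Y0 in Hq.
    replace (X - 2 * ((X + 1) / (2 * P)) * P + (X + 1) / (2 * P) * ((X + 1) / (2 * P)) * 0) with (-1) in Hq
      by (field; exact P0). lra.
  - specialize (Hq (P / Y)).
    replace (X - 2 * (P / Y) * P + P / Y * (P / Y) * Y) with (X - P*P/Y) in Hq by (field; exact Y0).
    assert (0 < Y) by lra.
    assert (P*P/Y <= X) by lra.
    apply Rmult_le_compat_r with (r:=Y) in H0; [|lra].
    replace (P*P/Y*Y) with (P*P) in H0 by (field; lra). nra.
Qed.

Lemma is_derive_sumR n (f df : nat -> R -> R) x :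
  (forall i, (i < n)%nat -> is_derive (f i) x (df i x)) ->
  is_derive (fun t => sumR n (fun i => f i t)) x (sumR n (fun i => df i x)).
Proof.
  induction n; simpl; intros H.
  - exact (@is_derive_const R_AbsRing R_NormedModule 0 x).
  - apply (is_derive_plus (fun t => sumR n (fun i => f i t)) (f n)).
    apply IHn; intros; apply H; lia. apply H; lia.
Qed.

Lemma cont2_sumR n (f : nat -> R -> R -> R) x y :
  (forall i, (i < n)%nat -> continuity_2d_pt (f i) x y) ->
  continuity_2d_pt (fun u v => sumR n (fun i => f i u v)) x y.
Proof.
  induction n; simpl; intros H.
  - apply continuity_2d_pt_const.
  - apply (continuity_2d_pt_plus (fun u v => sumR n (fun i => f i u v)) (f n)).
    apply IHn; intros; apply H; lia. apply H; lia.
Qed.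

Lemma cont2_swap f x y : continuity_2d_pt f x y -> continuity_2d_pt (fun a b => f b a) y x.
Proof. intros H eps. destruct (H eps) as [d Hd]. exists d. intros u v Hu Hv. apply Hd; auto. Qed.

Lemma cont2_1 f x y : continuity_2d_pt f x y -> continuity_pt (fun t => f t y) x.
Proof. intros H. apply continuity_pt_locally. intros eps. destruct (H eps) as [d Hd].
  exists d. intros u Hu. apply Hd. apply Hu. rewrite Rminus_eq_0, Rabs_R0. apply cond_pos. Qed.

Lemma cont2_1c f x y : continuity_2d_pt f x y -> continuous (fun t => f t y) x.
Proof. intros H. apply continuity_pt_filterlim. now apply cont2_1. Qed.

Lemma cont2_sqrt f x y : continuity_2d_pt f x y -> 0 <= f x y -> continuity_2d_pt (fun u v => sqrt (f u v)) x y.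
Proof. intros; apply continuity_1d_2d_pt_comp; auto. apply continuity_pt_sqrt; auto. Qed.

Lemma cont2_of_continuous2 f : continuous2 f -> forall x y, continuity_2d_pt f x y.
Proof. intros H x y. apply continuity_2d_pt_filterlim. apply (H x y). Qed.


Definition aC (C : homotopy) i th v := Derive (fun t => C i t v) th.
Definition bC (C : homotopy) i th v := Derive (fun s => C i th s) v.
Definition aT C i th v := Derive (fun t => aC C i t v) th.
Definition aV C i th v := Derive (fun s => aC C i th s) v.
Definition bT C i th v := Derive (fun t => bC C i t v) th.

Record SmoothF (C : homotopy) (i : nat) : Prop := {
  sf_exa : forall th v, ex_derive (fun t => C i t v) th;
  sf_exb : forall th v, ex_derive (fun s => C i th s) v;
  sf_ca : forall th v, continuity_2d_pt (aC C i) th v;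
  sf_cb : forall th v, continuity_2d_pt (bC C i) th v;
  sf_exaT : forall th v, ex_derive (fun t => aC C i t v) th;
  sf_exaV : forall th v, ex_derive (fun s => aC C i th s) v;
  sf_exbT : forall th v, ex_derive (fun t => bC C i t v) th;
  sf_exbV : forall th v, ex_derive (fun s => bC C i th s) v;
  sf_caT : forall th v, continuity_2d_pt (aT C i) th v;
  sf_caV : forall th v, continuity_2d_pt (aV C i) th v;
  sf_cbT : forall th v, continuity_2d_pt (bT C i) th v
}.
Lemma smooth_F C i : smooth2 (C i) -> SmoothF C i.
Proof.
  intros H. pose proof (H 2%nat) as H2.
  destruct H2 as [H0 H2].
  destruct H2 as [Hd1 [Ha Hb]].
  destruct Ha as [Ha0 [Hda [[HaT _] [HaV _]]]].
  destruct Hb as [Hb0 [Hdb [[HbT _] [HbV _]]]].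
  constructor; intros th v.
  - exact (proj1 (Hd1 th v)).
  - exact (proj2 (Hd1 th v)).
  - exact (cont2_of_continuous2 _ Ha0 th v).
  - exact (cont2_of_continuous2 _ Hb0 th v).
  - exact (proj1 (Hda th v)).
  - exact (proj2 (Hda th v)).
  - exact (proj1 (Hdb th v)).
  - exact (proj2 (Hdb th v)).
  - exact (cont2_of_continuous2 _ HaT th v).
  - exact (cont2_of_continuous2 _ HaV th v).
  - exact (cont2_of_continuous2 _ HbT th v).
Qed.
Lemma schwarz_C C i th v : SmoothF C i -> bT C i th v = aV C i th v.
Proof.
  intros S. unfold bT, aV, bC, aC.
  apply (Schwarz (C i) th v).
  - exists (mkposreal 1 Rlt_0_1). intros u w _ _. repeat split.
    apply (sf_exa _ _ S). apply (sf_exb _ _ S). apply (sf_exbT _ _ S). apply (sf_exaV _ _ S).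
  - apply (sf_cbT _ _ S).
  - apply (sf_caV _ _ S).
Qed.

Lemma Derive_shift (f : R -> R) x c : (forall t, f (t + c) = f t) -> ex_derive f x ->
  Derive f (x + c) = Derive f x.
Proof.
  intros Hp Hd. apply is_derive_unique.
  apply (is_derive_ext (fun t => f (t - c))). { intro t. rewrite <- (Hp (t - c)). f_equal; ring. }
  destruct Hd as [l Hl]. rewrite (is_derive_unique _ _ _ Hl).
  replace l with (scal 1 l) by (apply Rmult_1_l).
  apply (is_derive_comp f (fun t => t - c)). replace (x + c - c) with x; [exact Hl| symmetry; apply (Rplus_minus_r x c)].
  auto_derive; auto; ring.
Qed.

Lemma per_a C i v : (forall th v, C i (th + 2*PI) v = C i th v) -> SmoothF C i ->
  aC C i (2*PI) v = aC C i 0 v.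
Proof.
  intros Hp S. unfold aC. replace (2*PI) with (0 + 2*PI) by ring.
  apply Derive_shift. intros; apply Hp. apply (sf_exa _ _ S).
Qed.

Lemma per_b C i v : (forall th v, C i (th + 2*PI) v = C i th v) ->
  bC C i (2*PI) v = bC C i 0 v.
Proof.
  intros Hp. unfold bC. apply Derive_ext. intro t. replace (2*PI) with (0 + 2*PI) by ring. apply Hp.
Qed.


Lemma is_derive_eq (f : R -> R) x l l' : is_derive f x l -> l = l' -> is_derive f x l'.
Proof. intros H ->; exact H. Qed.

Lemma is_derive_sqsum n (A dA : nat -> R -> R) x :
  (forall i, (i < n)%nat -> is_derive (A i) x (dA i x)) ->
  is_derive (fun t => sumR n (fun i => A i t * A i t)) x (2 * sumR n (fun i => A i x * dA i x)).
Proof.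
  intros H.
  apply is_derive_eq with (sumR n (fun i => dA i x * A i x + A i x * dA i x)).
  - apply (is_derive_sumR n (fun i t => A i t * A i t) (fun i x => dA i x * A i x + A i x * dA i x)).
    intros i Hi. apply (is_derive_mult (A i) (A i)); auto. intros; apply Rmult_comm.
  - rewrite <- sumR_scal. apply sumR_ext; intros; ring.
Qed.

Lemma is_derive_sqrtsum n (A dA : nat -> R -> R) x :
  (forall i, (i < n)%nat -> is_derive (A i) x (dA i x)) ->
  0 < sumR n (fun i => A i x * A i x) ->
  is_derive (fun t => sqrt (sumR n (fun i => A i t * A i t))) x
    (sumR n (fun i => A i x * dA i x) / sqrt (sumR n (fun i => A i x * A i x))).
Proof.
  intros H Hp. eapply is_derive_eq.
  apply (is_derive_sqrt (fun t => sumR n (fun i => A i t * A i t))).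
  apply is_derive_sqsum; auto. simpl; exact Hp.
  assert (0 < sqrt (sumR n (fun i => A i x * A i x))) by (apply sqrt_lt_R0; auto).
  match goal with |- ?a = ?b => assert (E : (a:R) = b) by (field; lra); exact E end.
Qed.

Lemma is_derive_unit n (A dA : nat -> R -> R) x k :
  (forall i, (i < n)%nat -> is_derive (A i) x (dA i x)) ->
  0 < sumR n (fun i => A i x * A i x) ->
  (k < n)%nat ->
  is_derive (fun t => A k t / sqrt (sumR n (fun i => A i t * A i t))) x
    (dA k x / sqrt (sumR n (fun i => A i x * A i x)) -
     A k x * sumR n (fun i => A i x * dA i x) / (sqrt (sumR n (fun i => A i x * A i x)))^3).
Proof.
  intros H Hp Hk. eapply is_derive_eq.
  apply is_derive_div. apply H; auto. apply is_derive_sqrtsum; auto.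
  assert (0 < sqrt (sumR n (fun i => A i x * A i x))) by (apply sqrt_lt_R0; auto). simpl; lra.
  assert (0 < sqrt (sumR n (fun i => A i x * A i x))) by (apply sqrt_lt_R0; auto).
  match goal with |- ?a = ?b => assert (E : (a:R) = b) by (field; lra); exact E end.
Qed.


Definition Qf n C th v := sumR n (fun i => aC C i th v * aC C i th v).
Definition sT n C th v := sumR n (fun i => aC C i th v * aT C i th v).
Definition sV n C th v := sumR n (fun i => aC C i th v * aV C i th v).
Definition TT n C k th v := aT C k th v / speed n C th v - aC C k th v * sT n C th v / (speed n C th v)^3.

Definition Sm n C := forall i, (i < n)%nat -> SmoothF C i.

Lemma speed_eq n C th v : speed n C th v = sqrt (Qf n C th v).
Proof. reflexivity. Qed.

Lemma Qf_nonneg n C th v : 0 <= Qf n C th v.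
Proof. apply sumR_nonneg; intros; apply Rle_0_sqr. Qed.

Lemma speed_pos n C th v : 0 < Qf n C th v -> 0 < speed n C th v.
Proof. intros; rewrite speed_eq; apply sqrt_lt_R0; auto. Qed.

Lemma Qpos_of_vnorm n C th v : vnorm n (dth C th v) <> 0 -> 0 < Qf n C th v.
Proof.
  intros H. destruct (Qf_nonneg n C th v) as [|E]; auto.
  exfalso; apply H. unfold vnorm. change (sqrt (Qf n C th v) = 0). rewrite <- E. apply sqrt_0.
Qed.

Lemma Dspeed_th n C th v : Sm n C -> 0 < Qf n C th v ->
  is_derive (fun t => speed n C t v) th (sT n C th v / speed n C th v).
Proof.
  intros S H.
  apply (is_derive_sqrtsum n (fun i t => aC C i t v) (fun i t => aT C i t v) th).
  - intros i Hi. apply Derive_correct. apply (sf_exaT _ _ (S i Hi)).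
  - exact H.
Qed.

Lemma Dspeed_v n C th v : Sm n C -> 0 < Qf n C th v ->
  is_derive (fun s => speed n C th s) v (sV n C th v / speed n C th v).
Proof.
  intros S H.
  apply (is_derive_sqrtsum n (fun i s => aC C i th s) (fun i s => aV C i th s) v).
  - intros i Hi. apply Derive_correct. apply (sf_exaV _ _ (S i Hi)).
  - exact H.
Qed.

Lemma Dtan_th n C k th v : Sm n C -> 0 < Qf n C th v -> (k < n)%nat ->
  is_derive (fun t => tangent n C t v k) th (TT n C k th v).
Proof.
  intros S H Hk.
  apply (is_derive_unit n (fun i t => aC C i t v) (fun i t => aT C i t v) th k).
  - intros i Hi. apply Derive_correct. apply (sf_exaT _ _ (S i Hi)).
  - exact H.
  - exact Hk.
Qed.

Lemma curv_eq n C k th v : Sm n C -> 0 < Qf n C th v -> (k < n)%nat ->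
  curv n C th v k = / speed n C th v * TT n C k th v.
Proof. intros S H Hk. unfold curv. f_equal. apply is_derive_unique, Dtan_th; auto. Qed.

Lemma dSv_eq n C th v : Sm n C -> 0 < Qf n C th v ->
  Derive (fun s => speed n C th s) v = sV n C th v / speed n C th v.
Proof. intros S H. apply is_derive_unique, Dspeed_v; auto. Qed.

Lemma cont2_ext_pos (Q F G : R -> R -> R) x y :
  (forall u w, 0 < Q u w -> F u w = G u w) -> (forall u w, 0 <= Q u w) ->
  0 < Q x y -> continuity_2d_pt Q x y -> continuity_2d_pt G x y -> continuity_2d_pt F x y.
Proof.
  intros E N P CQ CG. apply continuity_2d_pt_ext_loc with G; auto.
  destruct (continuity_2d_pt_neq_0 Q x y CQ) as [d Hd]. lra.
  exists d. intros u w Hu Hw. symmetry. apply E. specialize (Hd u w Hu Hw). specialize (N u w). lra.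
Qed.

Lemma cont2_div f g x y : continuity_2d_pt f x y -> continuity_2d_pt g x y -> g x y <> 0 ->
  continuity_2d_pt (fun u v => f u v / g u v) x y.
Proof. intros. apply continuity_2d_pt_mult; auto. apply continuity_2d_pt_inv; auto. Qed.

Lemma cont2_pow f k x y : continuity_2d_pt f x y -> continuity_2d_pt (fun u v => f u v ^ k) x y.
Proof. intros H. induction k; simpl. apply continuity_2d_pt_const. apply continuity_2d_pt_mult; auto. Qed.

Lemma cQ n C th v : Sm n C -> continuity_2d_pt (Qf n C) th v.
Proof. intros S. apply cont2_sumR. intros i Hi. apply continuity_2d_pt_mult; apply (sf_ca _ _ (S i Hi)). Qed.

Lemma cspeed n C th v : Sm n C -> continuity_2d_pt (speed n C) th v.
Proof. intros S. apply (cont2_sqrt (Qf n C)). apply cQ; auto. apply Qf_nonneg. Qed.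

Lemma csT n C th v : Sm n C -> continuity_2d_pt (sT n C) th v.
Proof. intros S. apply cont2_sumR. intros i Hi. apply continuity_2d_pt_mult. apply (sf_ca _ _ (S i Hi)). apply (sf_caT _ _ (S i Hi)). Qed.

Lemma csV n C th v : Sm n C -> continuity_2d_pt (sV n C) th v.
Proof. intros S. apply cont2_sumR. intros i Hi. apply continuity_2d_pt_mult. apply (sf_ca _ _ (S i Hi)). apply (sf_caV _ _ (S i Hi)). Qed.

Lemma cTT n C k th v : Sm n C -> 0 < Qf n C th v -> (k < n)%nat -> continuity_2d_pt (TT n C k) th v.
Proof.
  intros S H Hk. assert (Ps := speed_pos _ _ _ _ H).
  apply continuity_2d_pt_minus.
  - apply cont2_div. apply (sf_caT _ _ (S k Hk)). apply cspeed; auto. lra.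
  - apply cont2_div. apply continuity_2d_pt_mult. apply (sf_ca _ _ (S k Hk)). apply csT; auto.
    apply cont2_pow, cspeed; auto. apply pow_nonzero. lra.
Qed.

Lemma ctan n C k th v : Sm n C -> 0 < Qf n C th v -> (k < n)%nat ->
  continuity_2d_pt (fun t s => tangent n C t s k) th v.
Proof.
  intros S H Hk. apply cont2_div. apply (sf_ca _ _ (S k Hk)). apply cspeed; auto.
  assert (Ps := speed_pos _ _ _ _ H). lra.
Qed.

Lemma ccurv n C k th v : Sm n C -> 0 < Qf n C th v -> (k < n)%nat ->
  continuity_2d_pt (fun t s => curv n C t s k) th v.
Proof.
  intros S H Hk. apply (cont2_ext_pos (Qf n C) _ (fun t s => / speed n C t s * TT n C k t s)); auto.
  - intros u w Hu. apply curv_eq; auto.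
  - apply Qf_nonneg.
  - apply cQ; auto.
  - apply continuity_2d_pt_mult. apply continuity_2d_pt_inv. apply cspeed; auto.
    assert (Ps := speed_pos _ _ _ _ H). lra. apply cTT; auto.
Qed.

Lemma cdSv n C th v : Sm n C -> 0 < Qf n C th v ->
  continuity_2d_pt (fun t s => Derive (fun z => speed n C t z) s) th v.
Proof.
  intros S H. apply (cont2_ext_pos (Qf n C) _ (fun t s => sV n C t s / speed n C t s)); auto.
  - intros u w Hu. apply dSv_eq; auto.
  - apply Qf_nonneg.
  - apply cQ; auto.
  - apply cont2_div. apply csV; auto. apply cspeed; auto. assert (Ps := speed_pos _ _ _ _ H). lra.
Qed.


Lemma twoPI_pos : 0 < 2 * PI.
Proof. assert (H := PI_RGT_0). lra. Qed.

Lemma Rmin02 : Rmin 0 (2*PI) = 0.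
Proof. apply Rmin_left. assert (H := twoPI_pos). lra. Qed.
Lemma Rmax02 : Rmax 0 (2*PI) = 2*PI.
Proof. apply Rmax_right. assert (H := twoPI_pos). lra. Qed.

Lemma NP n C w : Sm n C -> (forall th, 0 < Qf n C th w) ->
  exists d : posreal, forall v th, Rabs (v - w) < d -> 0 <= th <= 2*PI -> 0 < Qf n C th v.
Proof.
  intros S Hw.
  assert (H2 := twoPI_pos).
  destruct (continuity_ab_min (fun t => Qf n C t w) 0 (2*PI)) as [mx [Hmx _]]. lra.
  { intros c _. apply (cont2_1 (Qf n C)). apply cQ; auto. }
  set (m := Qf n C mx w). assert (Hm : 0 < m) by apply Hw.
  destruct (uniform_continuity_2d_1d (Qf n C) 0 (2*PI) w) with (eps := mkposreal m Hm) as [d Hd].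
  { intros; apply cQ; auto. }
  exists d. intros v th Hv Hth.
  assert (Hv' : w - d <= v <= w + d) by (apply Rabs_lt_between' in Hv; lra).
  specialize (Hd th w th v Hth ltac:(destruct d; simpl; lra) Hth Hv').
  rewrite Rminus_eq_0, Rabs_R0 in Hd. specialize (Hd (cond_pos d)). simpl in Hd.
  specialize (Hmx th Hth). simpl in Hmx. fold m in Hmx.
  apply Rabs_lt_between in Hd. lra.
Qed.

Lemma PC (F : R -> R -> R) w :
  (exists d : posreal, forall v th, Rabs (v - w) < d -> 0 <= th <= 2*PI -> continuity_2d_pt F th v) ->
  continuous (fun v => RInt (fun th => F th v) 0 (2*PI)) w.
Proof.
  intros [d Hd]. assert (H2 := twoPI_pos).
  apply continuity_pt_filterlim, continuity_pt_locally. intros eps.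
  assert (He : 0 < eps / (2*PI + 1)) by (apply Rdiv_lt_0_compat; [apply cond_pos| lra]).
  destruct (uniform_continuity_2d_1d' (fun v th => F th v) 0 (2*PI) w) with (eps := mkposreal _ He) as [de Hde].
  { intros x Hx. apply cont2_swap. apply Hd; auto. rewrite Rminus_eq_0, Rabs_R0; apply cond_pos. }
  assert (Hm : 0 < Rmin d de) by (apply Rmin_pos; apply cond_pos).
  exists (mkposreal _ Hm). intros u Hu. simpl in Hu. change (Rabs (u - w) < Rmin d de) in Hu.
  assert (Hud : Rabs (u - w) < d) by (eapply Rlt_le_trans; [exact Hu| apply Rmin_l]).
  assert (Hude : Rabs (u - w) < de) by (eapply Rlt_le_trans; [exact Hu| apply Rmin_r]).
  assert (Iu : ex_RInt (fun th => F th u) 0 (2*PI)).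
  { apply (@ex_RInt_continuous R_CompleteNormedModule). rewrite Rmin02, Rmax02. intros z Hz. apply (cont2_1c F). apply Hd; auto. }
  assert (Iw : ex_RInt (fun th => F th w) 0 (2*PI)).
  { apply (@ex_RInt_continuous R_CompleteNormedModule). rewrite Rmin02, Rmax02. intros z Hz. apply (cont2_1c F). apply Hd; auto.
    rewrite Rminus_eq_0, Rabs_R0; apply cond_pos. }
  assert (Hb : norm (minus (RInt (fun th => F th u) 0 (2*PI)) (RInt (fun th => F th w) 0 (2*PI)))
               <= scal (2*PI - 0) (eps / (2*PI+1))).
  { apply (norm_RInt_le (fun th => minus (F th u) (F th w)) (fun _ => eps / (2*PI+1)) 0 (2*PI)).
    - lra.
    - intros x Hx. simpl in Hde.
      assert (Hu' : w - de <= u <= w + de) by (apply Rabs_lt_between' in Hude; lra).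
      assert (Hw' : w - de <= w <= w + de) by (destruct de; simpl; lra).
      specialize (Hde x w x u Hx Hw' Hx Hu'). rewrite Rminus_eq_0, Rabs_R0 in Hde.
      specialize (Hde (cond_pos de)). simpl in Hde. apply Rlt_le. exact Hde.
    - apply (@is_RInt_minus R_NormedModule); [exact (@RInt_correct R_CompleteNormedModule _ _ _ Iu) | exact (@RInt_correct R_CompleteNormedModule _ _ _ Iw)].
    - exact (@is_RInt_const R_NormedModule 0 (2*PI) (eps / (2*PI+1))). }
  change (Rabs (RInt (fun th => F th u) 0 (2*PI) - RInt (fun th => F th w) 0 (2*PI)) <= (2*PI-0) * (eps / (2*PI+1))) in Hb.
  eapply Rle_lt_trans. exact Hb.
  assert (0 < eps) by apply cond_pos.
  apply Rmult_lt_reg_r with (2*PI+1). lra. field_simplify; lra.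
Qed.


Ltac Rsimp := unfold minus, plus, scal, opp, zero; simpl; unfold mult; simpl.

Lemma ICS (u s : R -> R) a b : a < b ->
  ex_RInt (fun x => u x ^ 2 * s x) a b -> ex_RInt (fun x => u x * s x) a b -> ex_RInt s a b ->
  (forall x, a < x < b -> 0 <= s x) -> 0 < RInt s a b ->
  (RInt (fun x => u x * s x) a b) ^ 2 <= RInt (fun x => u x ^ 2 * s x) a b * RInt s a b.
Proof.
  intros Hab I1 I2 I3 Hs HL.
  set (A := RInt (fun x => u x ^ 2 * s x) a b).
  set (P := RInt (fun x => u x * s x) a b).
  set (L := RInt s a b).
  set (l := P / L).
  assert (HI : is_RInt (fun x => (u x - l)^2 * s x) a b (A - 2*l*P + l*l*L)).
  { eapply is_RInt_ext.
    2: { apply (@is_RInt_plus R_NormedModule).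
         apply (@is_RInt_minus R_NormedModule).
         apply (@RInt_correct R_CompleteNormedModule _ _ _ I1).
         apply (@is_RInt_scal R_NormedModule). apply (@RInt_correct R_CompleteNormedModule _ _ _ I2).
         apply (@is_RInt_scal R_NormedModule). apply (@RInt_correct R_CompleteNormedModule _ _ _ I3). }
    intros x _. Rsimp. ring. }
  assert (Hge : 0 <= A - 2*l*P + l*l*L).
  { rewrite <- (is_RInt_unique _ _ _ _ HI). apply RInt_ge_0. lra. exists (A - 2*l*P + l*l*L); exact HI.
    intros x Hx. specialize (Hs x Hx). apply Rmult_le_pos; auto. apply pow2_ge_0. }
  unfold l in Hge.
  assert (K : forall A P L : R, 0 < L -> 0 <= A - 2*(P/L)*P + P/L*(P/L)*L -> P^2 <= A*L).
  { clear. intros A P L HL H.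
    replace (A - 2 * (P / L) * P + P / L * (P / L) * L) with (A - P*P/L) in H by (field; lra).
    assert (P * P / L <= A) by lra.
    apply Rmult_le_compat_r with (r := L) in H0; [|lra].
    replace (P*P/L*L) with (P*P) in H0 by (field; lra). simpl. lra. }
  apply K; auto.
Qed.


Definition Per (C : homotopy) := forall i th v, C i (th + 2 * PI) v = C i th v.

Lemma per_Q n C v : Sm n C -> Per C -> Qf n C (2*PI) v = Qf n C 0 v.
Proof. intros S P. apply sumR_ext; intros i Hi. rewrite (per_a C i v); auto. Qed.

Lemma per_speed n C v : Sm n C -> Per C -> speed n C (2*PI) v = speed n C 0 v.
Proof. intros S P. rewrite !speed_eq, per_Q; auto. Qed.

Lemma per_tan n C v i : Sm n C -> Per C -> (i < n)%nat -> tangent n C (2*PI) v i = tangent n C 0 v i.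
Proof. intros S P Hi. unfold tangent. rewrite per_speed; auto. f_equal. apply (per_a C i v); auto. Qed.

Definition IHb n C th v := inner n (curv n C th v) (dv C th v).

Lemma cIHb n C th v : Sm n C -> 0 < Qf n C th v -> continuity_2d_pt (IHb n C) th v.
Proof.
  intros S H. apply cont2_sumR. intros i Hi. apply continuity_2d_pt_mult.
  apply ccurv; auto. apply (sf_cb _ _ (S i Hi)).
Qed.

Definition ffun n C v th := sumR n (fun i => tangent n C th v i * bC C i th v).
Definition dffun n C th v := sumR n (fun i => TT n C i th v * bC C i th v + tangent n C th v i * bT C i th v).

Lemma D_ffun n C v th : Sm n C -> 0 < Qf n C th v -> is_derive (ffun n C v) th (dffun n C th v).
Proof.
  intros S H. unfold ffun, dffun.
  apply (is_derive_sumR n (fun i t => tangent n C t v i * bC C i t v)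
     (fun i th => TT n C i th v * bC C i th v + tangent n C th v i * bT C i th v)).
  intros i Hi. apply (is_derive_mult (fun t => tangent n C t v i) (fun t => bC C i t v)).
  apply Dtan_th; auto. apply Derive_correct, (sf_exbT _ _ (S i Hi)). intros; apply Rmult_comm.
Qed.

Lemma c_dffun n C th v : Sm n C -> 0 < Qf n C th v -> continuity_2d_pt (dffun n C) th v.
Proof.
  intros S H. apply cont2_sumR. intros i Hi. apply continuity_2d_pt_plus; apply continuity_2d_pt_mult.
  apply cTT; auto. apply (sf_cb _ _ (S i Hi)). apply ctan; auto. apply (sf_cbT _ _ (S i Hi)).
Qed.

Lemma dffun_eq n C th v : Sm n C -> 0 < Qf n C th v ->
  dffun n C th v = IHb n C th v * speed n C th v + sV n C th v / speed n C th v.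
Proof.
  intros S H. assert (Ps := speed_pos _ _ _ _ H). unfold dffun. rewrite sumR_plus. f_equal.
  - unfold IHb, inner. rewrite Rmult_comm, <- sumR_scal. apply sumR_ext; intros i Hi.
    rewrite curv_eq; auto. change (dv C th v i) with (bC C i th v). field. lra.
  - unfold sV. unfold Rdiv at 1. rewrite Rmult_comm, <- sumR_scal. apply sumR_ext; intros i Hi.
    rewrite (schwarz_C C i th v (S i Hi)). unfold tangent. change (dth C th v i) with (aC C i th v). field. lra.
Qed.

Lemma IBP n C v : Sm n C -> Per C -> (forall th, 0 < Qf n C th v) ->
  RInt (fun th => sV n C th v / speed n C th v) 0 (2*PI) =
  - RInt (fun th => IHb n C th v * speed n C th v) 0 (2*PI).
Proof.
  intros S P HQ. assert (H2 := twoPI_pos).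
  assert (I1 : is_RInt (fun th => dffun n C th v) 0 (2*PI) (minus (ffun n C v (2*PI)) (ffun n C v 0))).
  { apply (@is_RInt_derive R_CompleteNormedModule (ffun n C v)).
    - intros x _. apply D_ffun; auto.
    - intros x _. apply (cont2_1c (dffun n C)). apply c_dffun; auto. }
  assert (E0 : ffun n C v (2*PI) = ffun n C v 0).
  { unfold ffun. apply sumR_ext; intros i Hi. rewrite per_tan; auto. rewrite per_b; auto. }
  rewrite E0 in I1.
  assert (I2 : ex_RInt (fun th => IHb n C th v * speed n C th v) 0 (2*PI)).
  { apply (@ex_RInt_continuous R_CompleteNormedModule). intros z _.
    apply (cont2_1c (fun t s => IHb n C t s * speed n C t s)).
    apply continuity_2d_pt_mult. apply cIHb; auto. apply cspeed; auto. }
  assert (I3 : is_RInt (fun th => sV n C th v / speed n C th v) 0 (2*PI)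
     (minus (minus (ffun n C v 0) (ffun n C v 0)) (RInt (fun th => IHb n C th v * speed n C th v) 0 (2*PI)))).
  { eapply is_RInt_ext.
    2: { apply (@is_RInt_minus R_NormedModule). exact I1.
         apply (@RInt_correct R_CompleteNormedModule _ _ _ I2). }
    intros x _. cbv beta. rewrite dffun_eq; auto. Rsimp. ring. }
  rewrite (is_RInt_unique _ _ _ _ I3). Rsimp. ring.
Qed.


Lemma len_pos n C v : Sm n C -> (forall th, 0 < Qf n C th v) -> 0 < len n C v.
Proof.
  intros S HQ. apply RInt_gt_0. apply twoPI_pos.
  intros x _. apply speed_pos; auto.
  intros x _. apply (cont2_1c (speed n C)). apply cspeed; auto.
Qed.

Lemma DL n C v : Sm n C -> (forall th, 0 < Qf n C th v) ->
  is_derive (len n C) v (RInt (fun th => sV n C th v / speed n C th v) 0 (2*PI)).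
Proof.
  intros S HQ. destruct (NP n C v S HQ) as [d Hd].
  assert (H2 := twoPI_pos).
  eapply is_derive_eq.
  - apply (is_derive_RInt_param (fun u t => speed n C t u) 0 (2*PI) v).
    + exists d. intros y Hy t Ht. rewrite Rmin02, Rmax02 in Ht.
      assert (Hy' : Rabs (y - v) < d) by exact Hy.
      exact (ex_intro _ _ (Dspeed_v n C t y S (Hd y t Hy' Ht))).
    + intros t Ht. rewrite Rmin02, Rmax02 in Ht.
      apply (cont2_swap (fun t s => Derive (fun z => speed n C t z) s)). apply cdSv; auto.
    + exists d. intros y Hy. apply (@ex_RInt_continuous R_CompleteNormedModule).
      intros z _. apply (cont2_1c (speed n C)). apply cspeed; auto.
  - apply RInt_ext. intros x _. apply dSv_eq; auto.
Qed.

Lemma part1 n C v : Sm n C -> Per C -> (forall th, 0 < Qf n C th v) ->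
  is_derive (fun s => sqrt (len n C s)) v
    (RInt (fun th => sV n C th v / speed n C th v) 0 (2*PI) / (2 * sqrt (len n C v))) /\
  Rabs (RInt (fun th => sV n C th v / speed n C th v) 0 (2*PI) / (2 * sqrt (len n C v)))
   <= / 2 * sqrt (RInt (fun th => (inner n (curv n C th v) (dv C th v)) ^ 2 * speed n C th v) 0 (2*PI)).
Proof.
  intros S P HQ. assert (H2 := twoPI_pos). assert (HL := len_pos n C v S HQ).
  split.
  - apply (is_derive_sqrt (len n C)). apply DL; auto. auto.
  - rewrite IBP; auto.
    set (Pr := RInt (fun th => IHb n C th v * speed n C th v) 0 (2*PI)).
    set (A := RInt (fun th => (inner n (curv n C th v) (dv C th v)) ^ 2 * speed n C th v) 0 (2*PI)).
    set (L := len n C v) in *.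
    assert (CS : Pr ^ 2 <= A * L).
    { apply (ICS (fun th => IHb n C th v) (fun th => speed n C th v) 0 (2*PI)); auto.
      - apply (@ex_RInt_continuous R_CompleteNormedModule). intros z _.
        apply (cont2_1c (fun t s => IHb n C t s ^ 2 * speed n C t s)).
        apply continuity_2d_pt_mult. apply cont2_pow, cIHb; auto. apply cspeed; auto.
      - apply (@ex_RInt_continuous R_CompleteNormedModule). intros z _.
        apply (cont2_1c (fun t s => IHb n C t s * speed n C t s)).
        apply continuity_2d_pt_mult. apply cIHb; auto. apply cspeed; auto.
      - apply (@ex_RInt_continuous R_CompleteNormedModule). intros z _.
        apply (cont2_1c (speed n C)). apply cspeed; auto.
      - intros x _. apply Rlt_le, speed_pos; auto. }
    clearbody Pr A L.
    assert (HA : 0 <= A). { assert (0 <= Pr^2) by apply pow2_ge_0. nra. }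
    assert (Hs : 0 < sqrt L) by (apply sqrt_lt_R0; auto).
    assert (HP : Rabs Pr <= sqrt A * sqrt L).
    { rewrite <- sqrt_mult_alt; auto. rewrite <- sqrt_Rsqr_abs. apply sqrt_le_1_alt. unfold Rsqr. simpl in CS. lra. }
    rewrite Rabs_div, Rabs_Ropp. 2: lra.
    rewrite (Rabs_right (2 * sqrt L)) by lra.
    apply Rmult_le_reg_r with (2 * sqrt L). lra.
    unfold Rdiv. rewrite Rmult_assoc, Rinv_l, Rmult_1_r by lra.
    replace (/ 2 * sqrt A * (2 * sqrt L)) with (sqrt A * sqrt L) by field. exact HP.
Qed.


Lemma optk x J d : 0 <= J -> 0 < d -> (forall k, 0 < k -> x <= J / (4*k) + k * d / 4) ->
  x <= sqrt J / 2 * sqrt d.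
Proof.
  intros HJ Hd H. destruct HJ as [HJ|HJ].
  - assert (sJ : 0 < sqrt J) by (apply sqrt_lt_R0; auto).
    assert (sd : 0 < sqrt d) by (apply sqrt_lt_R0; auto).
    specialize (H (sqrt J / sqrt d) ltac:(apply Rdiv_lt_0_compat; auto)).
    replace (J / (4 * (sqrt J / sqrt d)) + sqrt J / sqrt d * d / 4) with (sqrt J / 2 * sqrt d) in H; auto.
    assert (EJ := sqrt_sqrt J (Rlt_le _ _ HJ)); assert (Ed := sqrt_sqrt d (Rlt_le _ _ Hd)).
    set (a := sqrt J) in *; set (b := sqrt d) in *. clearbody a b. subst J d.
    field. lra.
  - subst J. rewrite sqrt_0. replace (0/2 * sqrt d) with 0 by field.
    destruct (Rle_dec x 0) as [|Hx]; auto. exfalso.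
    specialize (H (2*x/d) ltac:(apply Rdiv_lt_0_compat; lra)).
    replace (0 / (4 * (2 * x / d)) + 2 * x / d * d / 4) with (x/2) in H by (field; lra). lra.
Qed.

Lemma amgm J k : 0 <= J -> 0 < k -> sqrt J / 2 <= J / (4*k) + k / 4.
Proof.
  intros HJ Hk. assert (E := sqrt_sqrt J HJ). assert (0 <= sqrt J) by apply sqrt_pos.
  apply Rmult_le_reg_r with (4*k). lra.
  replace ((J / (4 * k) + k / 4) * (4 * k)) with (J + k*k) by (field; lra).
  assert (0 <= (sqrt J - k)*(sqrt J - k)) by apply Rle_0_sqr. nra.
Qed.

Lemma part2gen (h dh Jc : R -> R) v1 v2 :
  (forall x, continuous Jc x) -> (forall x, 0 <= Jc x) ->
  (forall v, 0 <= v <= 1 -> is_derive h v (dh v) /\ dh v <= sqrt (Jc v) / 2) ->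
  0 <= v1 -> v1 < v2 -> v2 <= 1 ->
  h v2 - h v1 <= sqrt (RInt Jc 0 1) / 2 * sqrt (v2 - v1).
Proof.
  intros CJ PJ Hh H1 H12 H2.
  assert (IJ : forall a b, ex_RInt Jc a b).
  { intros a b. apply (@ex_RInt_continuous R_CompleteNormedModule). intros; apply CJ. }
  assert (Hsub : RInt Jc v1 v2 <= RInt Jc 0 1).
  { rewrite <- (RInt_Chasles Jc 0 v1 1) by auto. rewrite <- (RInt_Chasles Jc v1 v2 1) by auto.
    assert (0 <= RInt Jc 0 v1) by (apply RInt_ge_0; auto; intros; apply PJ).
    assert (0 <= RInt Jc v2 1) by (apply RInt_ge_0; auto; intros; apply PJ).
    Rsimp. lra. }
  apply optk; [apply RInt_ge_0; [lra| apply IJ | intros; apply PJ] | lra | ].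
  intros k Hk.
  set (Gf := fun v => h v - / (4*k) * RInt Jc v1 v - k * v / 4).
  set (dG := fun v => dh v - / (4*k) * Jc v - k / 4).
  assert (DG : forall v, 0 <= v <= 1 -> is_derive Gf v (dG v)).
  { intros v Hv. unfold Gf, dG.
    assert (D1 : is_derive h v (dh v)) by apply (Hh v Hv).
    assert (D2 : is_derive (fun v => / (4*k) * RInt Jc v1 v) v (/ (4*k) * Jc v)).
    { apply (is_derive_scal (fun v => RInt Jc v1 v)).
      apply (is_derive_RInt Jc (RInt Jc v1) v1 v).
      exists (mkposreal 1 Rlt_0_1). intros y _. apply (@RInt_correct R_CompleteNormedModule). auto.
      apply CJ. }
    assert (D3 : is_derive (fun v : R => k * v / 4) v (k / 4)) by (auto_derive; auto; field).
    eapply is_derive_eq.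
    apply (@is_derive_minus R_AbsRing R_NormedModule _ _ v _ _ (@is_derive_minus R_AbsRing R_NormedModule _ _ v _ _ D1 D2) D3).
    Rsimp. ring. }
  destruct (MVT_gen Gf v1 v2 dG) as [c [Hc E]].
  - rewrite Rmin_left, Rmax_right by lra. intros x Hx. apply DG; lra.
  - rewrite Rmin_left, Rmax_right by lra. intros x Hx. apply continuity_pt_filterlim.
    apply (@ex_derive_continuous R_AbsRing R_NormedModule). exists (dG x). apply DG; lra.
  - rewrite Rmin_left, Rmax_right in Hc by lra.
    assert (HdG : dG c <= 0).
    { unfold dG. destruct (Hh c ltac:(lra)) as [_ Hd]. assert (Ha := amgm (Jc c) k (PJ c) Hk).
      unfold Rdiv in *. lra. }
    assert (HG : Gf v2 - Gf v1 <= 0). { rewrite E. apply Rmult_le_0_r; lra. }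
    unfold Gf in HG. rewrite RInt_point in HG. unfold zero in HG; simpl in HG.
    assert (HJJ : / (4*k) * RInt Jc v1 v2 <= / (4*k) * RInt Jc 0 1).
    { apply Rmult_le_compat_l; auto. apply Rlt_le, Rinv_0_lt_compat; lra. }
    unfold Rdiv. rewrite Rmult_comm. lra.
Qed.


Lemma curv_tan n C th v : Sm n C -> 0 < Qf n C th v ->
  inner n (curv n C th v) (tangent n C th v) = 0.
Proof.
  intros S H. assert (Ps := speed_pos _ _ _ _ H).
  assert (EQ : Qf n C th v = speed n C th v ^ 2).
  { rewrite speed_eq. simpl. rewrite Rmult_1_r, sqrt_sqrt; auto. apply Qf_nonneg. }
  set (s := speed n C th v) in *.
  assert (E1 : inner n (curv n C th v) (tangent n C th v) =
               / s * / s * sumR n (fun i => aC C i th v * TT n C i th v)).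
  { unfold inner. rewrite <- sumR_scal. apply sumR_ext; intros i Hi.
    rewrite curv_eq; auto. unfold tangent. change (dth C th v i) with (aC C i th v). fold s. field. lra. }
  assert (E2 : sumR n (fun i => aC C i th v * TT n C i th v) =
               / s * sT n C th v - (sT n C th v / s^3) * Qf n C th v).
  { unfold sT, Qf. rewrite <- !sumR_scal, <- sumR_minus. apply sumR_ext; intros i Hi.
    unfold TT. fold s. change (sumR n (fun i0 => aC C i0 th v * aT C i0 th v)) with (sT n C th v). field. lra. }
  rewrite E1, E2, EQ. field. lra.
Qed.

Lemma pointwise_le n C th v : Sm n C -> 0 < Qf n C th v ->
  (inner n (curv n C th v) (dv C th v)) ^ 2 * speed n C th v <=
  (vnorm n (curv n C th v)) ^ 2 * (vnorm n (projN n C th v (dv C th v))) ^ 2 * speed n C th v.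
Proof.
  intros S H. assert (Ps := speed_pos _ _ _ _ H).
  rewrite !vnorm_sq.
  assert (E : inner n (curv n C th v) (projN n C th v (dv C th v)) = inner n (curv n C th v) (dv C th v)).
  { assert (K : forall f g T c, sumR n (fun i => f i * (g i - c * T i)) = sumR n (fun i => f i * g i) - c * sumR n (fun i => f i * T i)).
    { intros; rewrite <- sumR_scal, <- sumR_minus; apply sumR_ext; intros; ring. }
    unfold projN, inner. rewrite K.
    change (sumR n (fun i => curv n C th v i * tangent n C th v i)) with (inner n (curv n C th v) (tangent n C th v)).
    rewrite curv_tan; auto. ring. }
  rewrite <- E. apply Rmult_le_compat_r. lra. apply CS_fin.
Qed.


Definition Jint n C th v := vnorm n (curv n C th v) ^ 2 * vnorm n (projN n C th v (dv C th v)) ^ 2 * speed n C th v.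
Definition Jin n C v := RInt (fun th => Jint n C th v) 0 (2*PI).

Lemma Jfun_eq n C : Jfun n C = RInt (Jin n C) 0 1.
Proof. reflexivity. Qed.

Lemma cinner_self (f : nat -> R -> R -> R) n x y :
  (forall i, (i < n)%nat -> continuity_2d_pt (f i) x y) ->
  continuity_2d_pt (fun u w => vnorm n (fun i => f i u w) ^ 2) x y.
Proof.
  intros H. apply continuity_2d_pt_ext with (fun u w => sumR n (fun i => f i u w * f i u w)).
  intros; rewrite vnorm_sq; reflexivity.
  apply cont2_sumR; intros; apply continuity_2d_pt_mult; auto.
Qed.

Lemma cJint n C th v : Sm n C -> 0 < Qf n C th v -> continuity_2d_pt (Jint n C) th v.
Proof.
  intros S H. unfold Jint. apply continuity_2d_pt_mult; [apply continuity_2d_pt_mult|].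
  - apply (cinner_self (fun i t s => curv n C t s i)). intros; apply ccurv; auto.
  - apply (cinner_self (fun i t s => projN n C t s (dv C t s) i)). intros i Hi.
    unfold projN. apply continuity_2d_pt_minus. apply (sf_cb _ _ (S i Hi)).
    apply continuity_2d_pt_mult; [|apply ctan; auto].
    apply cont2_sumR. intros j Hj. apply continuity_2d_pt_mult. apply (sf_cb _ _ (S j Hj)). apply ctan; auto.
  - apply cspeed; auto.
Qed.

Lemma Jin_cont n C w : Sm n C -> (forall th, 0 < Qf n C th w) -> continuous (Jin n C) w.
Proof.
  intros S HQ. destruct (NP n C w S HQ) as [d Hd]. apply PC. exists d. intros v th Hv Hth.
  apply cJint; auto.
Qed.

Lemma ex_Jint n C v : Sm n C -> (forall th, 0 < Qf n C th v) -> ex_RInt (fun th => Jint n C th v) 0 (2*PI).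
Proof.
  intros S HQ. apply (@ex_RInt_continuous R_CompleteNormedModule). intros z _.
  apply (cont2_1c (Jint n C)). apply cJint; auto.
Qed.

Lemma Jin_nonneg n C v : Sm n C -> (forall th, 0 < Qf n C th v) -> 0 <= Jin n C v.
Proof.
  intros S HQ. apply RInt_ge_0. apply Rlt_le, twoPI_pos. apply ex_Jint; auto.
  intros x _. unfold Jint. assert (Ps := speed_pos _ _ _ _ (HQ x)).
  apply Rmult_le_pos; [apply Rmult_le_pos|]; try apply pow2_ge_0; lra.
Qed.

Lemma A_le_Jin n C v : Sm n C -> (forall th, 0 < Qf n C th v) ->
  RInt (fun th => (inner n (curv n C th v) (dv C th v)) ^ 2 * speed n C th v) 0 (2*PI) <= Jin n C v.
Proof.
  intros S HQ. apply RInt_le. apply Rlt_le, twoPI_pos.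
  - apply (@ex_RInt_continuous R_CompleteNormedModule). intros z _.
    apply (cont2_1c (fun t s => IHb n C t s ^ 2 * speed n C t s)).
    apply continuity_2d_pt_mult. apply cont2_pow, cIHb; auto. apply cspeed; auto.
  - apply ex_Jint; auto.
  - intros x _. apply pointwise_le; auto.
Qed.

Definition cl (v : R) := Rmax 0 (Rmin 1 v).

Lemma cl_range v : 0 <= cl v <= 1.
Proof. unfold cl, Rmax, Rmin. repeat destruct Rle_dec; lra. Qed.

Lemma cl_id v : 0 <= v <= 1 -> cl v = v.
Proof. unfold cl, Rmax, Rmin. repeat destruct Rle_dec; lra. Qed.

Lemma cl_lip x y : Rabs (cl x - cl y) <= Rabs (x - y).
Proof. unfold cl, Rmax, Rmin. unfold Rabs. repeat destruct Rle_dec; repeat destruct Rcase_abs; lra. Qed.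

Lemma cl_cont x : continuous cl x.
Proof.
  apply continuity_pt_filterlim, continuity_pt_locally. intros eps. exists eps. intros y Hy.
  eapply Rle_lt_trans. apply cl_lip. exact Hy.
Qed.


Theorem mainTheorem6 (n : nat) (C : homotopy)
  (Hsmooth : forall i, (i < n)%nat -> smooth2 (C i))
  (Hper : forall i th v, C i (th + 2 * PI) v = C i th v)
  (Himm : forall th v, 0 <= v <= 1 -> vnorm n (dth C th v) <> 0) :
  (forall v, 0 <= v <= 1 ->
     ex_derive (fun s => sqrt (len n C s)) v /\
     Derive (fun s => sqrt (len n C s)) v <=
       / 2 * sqrt (RInt (fun th =>
           (inner n (curv n C th v) (dv C th v)) ^ 2 * speed n C th v) 0 (2 * PI)))
  /\
  (forall v1 v2, 0 <= v1 -> v1 < v2 -> v2 <= 1 ->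
     sqrt (len n C v2) - sqrt (len n C v1) <= sqrt (Jfun n C) / 2 * sqrt (v2 - v1))
  /\
  (exists K : R, forall v1 v2, 0 <= v1 <= 1 -> 0 <= v2 <= 1 ->
     Rabs (sqrt (len n C v2) - sqrt (len n C v1)) <= K * sqrt (Rabs (v2 - v1))).
Proof.
  assert (S : Sm n C) by (intros i Hi; apply smooth_F, Hsmooth; auto).
  assert (P : Per C) by exact Hper.
  assert (HQ : forall v, 0 <= v <= 1 -> forall th, 0 < Qf n C th v)
    by (intros v Hv th; apply Qpos_of_vnorm, Himm; auto).
  set (Dg := fun v => RInt (fun th => sV n C th v / speed n C th v) 0 (2*PI) / (2 * sqrt (len n C v))).
  set (Jc := fun v => Jin n C (cl v)).
  assert (CJ : forall x, continuous Jc x).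
  { intros x. apply (continuous_comp cl (Jin n C)). apply cl_cont. apply Jin_cont; auto. apply HQ, cl_range. }
  assert (PJ : forall x, 0 <= Jc x).
  { intros x. unfold Jc. apply Jin_nonneg. exact S. apply HQ, cl_range. }
  assert (EJ : Jfun n C = RInt Jc 0 1).
  { rewrite Jfun_eq. apply RInt_ext. intros x Hx. rewrite Rmin_left, Rmax_right in Hx by lra.
    unfold Jc. rewrite cl_id. reflexivity. lra. }
  assert (Hd : forall v, 0 <= v <= 1 -> is_derive (fun s => sqrt (len n C s)) v (Dg v) /\
                 Rabs (Dg v) <= sqrt (Jc v) / 2).
  { intros v Hv. destruct (part1 n C v S P (HQ v Hv)) as [D1 D2]. split. exact D1.
    eapply Rle_trans. exact D2. unfold Jc. rewrite cl_id by auto.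
    assert (sqrt (RInt (fun th => (inner n (curv n C th v) (dv C th v)) ^ 2 * speed n C th v) 0 (2*PI))
            <= sqrt (Jin n C v)) by (apply sqrt_le_1_alt, A_le_Jin; auto). lra. }
  assert (P2 : forall v1 v2, 0 <= v1 -> v1 < v2 -> v2 <= 1 ->
     sqrt (len n C v2) - sqrt (len n C v1) <= sqrt (Jfun n C) / 2 * sqrt (v2 - v1)).
  { intros v1 v2 H1 H12 H2. rewrite EJ.
    apply (part2gen (fun s => sqrt (len n C s)) Dg Jc); [exact CJ|exact PJ| |exact H1|exact H12|exact H2].
    intros v Hv. destruct (Hd v Hv) as [D1 D2]. split. exact D1.
    eapply Rle_trans. apply Rle_abs. exact D2. }
  assert (P2' : forall v1 v2, 0 <= v1 -> v1 < v2 -> v2 <= 1 ->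
     sqrt (len n C v1) - sqrt (len n C v2) <= sqrt (Jfun n C) / 2 * sqrt (v2 - v1)).
  { intros v1 v2 H1 H12 H2. rewrite EJ.
    replace (sqrt (len n C v1) - sqrt (len n C v2)) with
      ((fun s => - sqrt (len n C s)) v2 - (fun s => - sqrt (len n C s)) v1) by ring.
    apply (part2gen (fun s => - sqrt (len n C s)) (fun v => - Dg v) Jc); [exact CJ|exact PJ| |exact H1|exact H12|exact H2].
    intros v Hv. destruct (Hd v Hv) as [D1 D2]. split.
    apply (is_derive_opp (fun s => sqrt (len n C s))). exact D1.
    eapply Rle_trans. 2: exact D2. rewrite <- Rabs_Ropp. apply Rle_abs. }
  split; [|split].
  - intros v Hv. destruct (Hd v Hv) as [D1 D2]. destruct (part1 n C v S P (HQ v Hv)) as [_ D3].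
    split. exists (Dg v); exact D1.
    assert (ED : Derive (fun s => sqrt (len n C s)) v = Dg v) by (apply is_derive_unique; exact D1).
    rewrite ED. eapply Rle_trans. apply Rle_abs. exact D3.
  - exact P2.
  - exists (sqrt (Jfun n C) / 2). intros v1 v2 H1 H2.
    destruct (Rtotal_order v1 v2) as [Hlt|[Heq|Hgt]].
    + rewrite (Rabs_right (v2 - v1)) by lra. apply Rabs_le. split.
      * specialize (P2' v1 v2 ltac:(lra) Hlt ltac:(lra)). lra.
      * apply P2; lra.
    + subst. rewrite !Rminus_eq_0, Rabs_R0, sqrt_0, Rmult_0_r. lra.
    + rewrite (Rabs_left (v2 - v1)) by lra. replace (- (v2 - v1)) with (v1 - v2) by ring.
      apply Rabs_le. split.
      * specialize (P2 v2 v1 ltac:(lra) Hgt ltac:(lra)). lra.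
      * apply P2'; lra.
Qed.
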